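(* (1) For all $\mathtt{dCBN}$ terms $M,N$: $M^n\{N^n/x\} = (M\{N/x\})^n$. (2) For all $\mathtt{dCBV}$ terms $M,N$: if $N^v = !P$ for some $P$, then $(M\{N/x\})^v = M^v\{P/x\}$.
   Context: $\mathtt{dCBN}$ and $\mathtt{dCBV}$ share the syntax $M,N::=x\mid\lambda x.M\mid MN\mid M[N/x]$ ($M[N/x]$ an explicit substitution binding $x$); $M\{N/x\}$ is capture-avoiding substitution. List contexts $L::=\square\mid L[N/x]$. $\mathtt{dBang}$ terms are $M ::= x\mid\lambda x.M\mid MN\mid M[N/x]\mid\ !M\mid\mathrm{der}\,M$. The translation $(\cdot)^n$ into $\mathtt{dBang}$: $x^n=x$, $(\lambda x.M)^n=\lambda x.M^n$, $(MN)^n=M^n\,!N^n$, $(M[N/x])^n=M^n[!N^n/x]$. The translation $(\cdot)^v$: $x^v=!x$, $(\lambda x.M)^v=!(\lambda x.M^v)$, $(MN)^v=L\langle P\rangle N^v$ if $M^v=L\langle !P\rangle$ for a $\mathtt{dBang}$ list context $L$, and $(MN)^v=\mathrm{der}(M^v)\,N^v$ otherwise; $(M[N/x])^v=M^v[N^v/x]$. *)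

(* Defs.v *)
(* Terms in de Bruijn representation, so that syntactic
   equality coincides with alpha-equivalence. *)
From Stdlib Require Import Arith.

(* dCBN / dCBV terms: x | \x.M | M N | M[N/x]  (ES M N binds index 0 in M) *)
Inductive term : Type :=
| Var : nat -> term
| Lam : term -> term
| App : term -> term -> term
| ES  : term -> term -> term.

Inductive bterm : Type :=
| BVar : nat -> bterm
| BLam : bterm -> bterm
| BApp : bterm -> bterm -> bterm
| BES  : bterm -> bterm -> bterm
| Bang : bterm -> bterm
| Der  : bterm -> bterm.

Fixpoint lift (k : nat) (t : term) : term :=
  match t with
  | Var n => if k <=? n then Var (S n) else Var n
  | Lam m => Lam (lift (S k) m)
  | App m n => App (lift k m) (lift k n)
  | ES m n => ES (lift (S k) m) (lift k n)
  end.

Fixpoint subst (k : nat) (N : term) (t : term) : term :=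
  match t with
  | Var n => match Nat.compare n k with
             | Lt => Var n
             | Eq => N
             | Gt => Var (pred n)
             end
  | Lam m => Lam (subst (S k) (lift 0 N) m)
  | App m n => App (subst k N m) (subst k N n)
  | ES m n => ES (subst (S k) (lift 0 N) m) (subst k N n)
  end.

Fixpoint blift (k : nat) (t : bterm) : bterm :=
  match t with
  | BVar n => if k <=? n then BVar (S n) else BVar n
  | BLam m => BLam (blift (S k) m)
  | BApp m n => BApp (blift k m) (blift k n)
  | BES m n => BES (blift (S k) m) (blift k n)
  | Bang m => Bang (blift k m)
  | Der m => Der (blift k m)
  end.

Fixpoint bsubst (k : nat) (N : bterm) (t : bterm) : bterm :=
  match t with
  | BVar n => match Nat.compare n k with
              | Lt => BVar n
              | Eq => N
              | Gt => BVar (pred n)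
              end
  | BLam m => BLam (bsubst (S k) (blift 0 N) m)
  | BApp m n => BApp (bsubst k N m) (bsubst k N n)
  | BES m n => BES (bsubst (S k) (blift 0 N) m) (bsubst k N n)
  | Bang m => Bang (bsubst k N m)
  | Der m => Der (bsubst k N m)
  end.

Fixpoint trn (t : term) : bterm :=
  match t with
  | Var x => BVar x
  | Lam m => BLam (trn m)
  | App m n => BApp (trn m) (Bang (trn n))
  | ES m n => BES (trn m) (Bang (trn n))
  end.

(* If t = L<!P> for a list context L, returns Some L<P>, else None. *)
Fixpoint strip_bang (t : bterm) : option bterm :=
  match t with
  | Bang p => Some p
  | BES m n => match strip_bang m with
               | Some q => Some (BES q n)
               | None => None
               end
  | _ => None
  end.

Fixpoint trv (t : term) : bterm :=
  match t with
  | Var x => Bang (BVar x)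
  | Lam m => Bang (BLam (trv m))
  | App m n => match strip_bang (trv m) with
               | Some lp => BApp lp (trv n)
               | None => BApp (Der (trv m)) (trv n)
               end
  | ES m n => BES (trv m) (trv n)
  end.

(* Main.v *)
Require Import Defs.
From Stdlib Require Import Arith Lia.

Lemma trn_lift : forall t k, trn (lift k t) = blift k (trn t).
Proof.
  induction t; intros k; simpl; try (rewrite ?IHt, ?IHt1, ?IHt2; reflexivity).
  destruct (k <=? n); reflexivity.
Qed.

Lemma strip_blift : forall t k,
  strip_bang (blift k t) = option_map (blift k) (strip_bang t).
Proof.
  induction t; intros k; simpl; try reflexivity.
  - destruct (k <=? n); reflexivity.
  - rewrite IHt1. destruct (strip_bang t1); reflexivity.
Qed.

Lemma trv_lift : forall t k, trv (lift k t) = blift k (trv t).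
Proof.
  induction t; intros k; simpl.
  - destruct (k <=? n); reflexivity.
  - rewrite IHt; reflexivity.
  - rewrite IHt1, IHt2, strip_blift. destruct (strip_bang (trv t1)); reflexivity.
  - rewrite IHt1, IHt2; reflexivity.
Qed.

Fixpoint spine_ok (t : bterm) : Prop :=
  match t with BVar _ => False | BES m _ => spine_ok m | _ => True end.

Lemma trv_spine : forall t, spine_ok (trv t).
Proof.
  induction t; simpl; auto.
  destruct (strip_bang (trv t1)); simpl; auto.
Qed.

Lemma strip_bsubst : forall t k P, spine_ok t ->
  strip_bang (bsubst k P t) = option_map (bsubst k P) (strip_bang t).
Proof.
  induction t; intros k P H; simpl in *; try reflexivity.
  - contradiction.
  - rewrite IHt1 by assumption. destruct (strip_bang t1); reflexivity.
Qed.

Theorem mainTheorem6 :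
  (forall (M N : term) (x : nat),
      bsubst x (trn N) (trn M) = trn (subst x N M)) /\
  (forall (M N : term) (x : nat) (P : bterm),
      trv N = Bang P -> trv (subst x N M) = bsubst x P (trv M)).
Proof.
  split.
  - induction M; intros N x; simpl.
    + destruct (Nat.compare n x); reflexivity.
    + rewrite <- trn_lift, IHM; reflexivity.
    + rewrite IHM1, IHM2; reflexivity.
    + rewrite <- trn_lift, IHM1, IHM2; reflexivity.
  - induction M; intros N x P HN; simpl.
    + destruct (Nat.compare n x); simpl; auto.
    + assert (H : trv (lift 0 N) = Bang (blift 0 P)) by (rewrite trv_lift, HN; reflexivity).
      rewrite (IHM _ _ _ H); reflexivity.
    + rewrite (IHM1 _ _ _ HN), (IHM2 _ _ _ HN), strip_bsubst by apply trv_spine.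
      destruct (strip_bang (trv M1)); reflexivity.
    + assert (H : trv (lift 0 N) = Bang (blift 0 P)) by (rewrite trv_lift, HN; reflexivity).
      rewrite (IHM1 _ _ _ H), (IHM2 _ _ _ HN); reflexivity.
Qed.
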